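(* Let $\mathcal{M}\subset\mathbb{R}^d$ be a set of $n$ distinct points with the Euclidean metric, $k$ an integer with $2\le k<n$, and $0<\epsilon<\tfrac12$. Let $\epsilon_1=\frac{\epsilon}{3+2\epsilon}$, let $P_1$ be the output of the farthest-point-insertion procedure on $(\mathcal{M},k)$ (choose $q_1,q_2\in\mathcal{M}$ realizing $\operatorname{diam}(\mathcal{M})$, set $S_2=\{q_1,q_2\}$, and for $i=2,\dots,k-1$ add a point of $\mathcal{M}$ maximizing $\delta(\cdot,S_i)$), and let $\epsilon_2=\frac{\epsilon_1R_{P_1}}{2\sqrt d}$. Consider an axis-parallel grid in $\mathbb{R}^d$ of cubic cells of side length $\epsilon_2$. Then the number of grid cells that intersect $\mathcal{M}$ is $O\!\left(k\lceil 1/\epsilon_1\rceil^d\right)$, where the implied constant depends only on $d$.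
   Context: For a finite nonempty $S\subset\mathcal{M}$, $\delta(x,S)=\min_{s\in S}\|x-s\|$ and $R_S=\max_{x\in\mathcal{M}}\delta(x,S)$. *)

(* Defs.v *)
From HB Require Import structures.
From mathcomp Require Import all_boot all_order all_algebra.
From mathcomp Require Import reals.
Set Implicit Arguments. Unset Strict Implicit. Unset Printing Implicit Defensive.
Import Order.TTheory GRing.Theory Num.Theory.
Local Open Scope ring_scope.

Section Defs.
Variables (R : realType) (d : nat).
Notation pt := 'rV[R]_d.

Definition edist (x y : pt) : R := Num.sqrt (\sum_(i < d) (x 0 i - y 0 i) ^+ 2).

(* delta(x,S) = min_{s in S} ||x - s||  (meaningful for nonempty S) *)
Definition delta (x : pt) (S : seq pt) : R :=
  \big[Num.min/edist x (head x S)]_(s <- S) edist x s.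

(* R_S = max_{x in M} delta(x,S) (distances are >= 0, M nonempty) *)
Definition covrad (M S : seq pt) : R := \big[Num.max/0]_(x <- M) delta x S.

(* P is a possible output of farthest-point insertion on (M,k):
   P = [q1; q2; p3; ...; pk], q1,q2 realize diam(M), and each subsequent
   point maximizes delta(., S_i) over M, where S_i = first i points. *)
Definition fpi_output (M : seq pt) (k : nat) (P : seq pt) : Prop :=
  [/\ size P = k, {subset P <= M},
      (forall x y, x \in M -> y \in M -> edist x y <= edist (nth 0 P 0) (nth 0 P 1)) &
      (forall i, (2 <= i < k)%N -> forall x, x \in M ->
          delta x (take i P) <= delta (nth 0 P i) (take i P))].

(* index of the half-open grid cell
   prod_i [o_i + s z_i, o_i + s (z_i + 1)) containing x *)
Definition cell_index (o : pt) (s : R) (x : pt) : 'rV[int]_d :=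
  \row_i Num.floor ((x 0 i - o 0 i) / s).

Definition num_cells (o : pt) (s : R) (M : seq pt) : nat :=
  size (undup [seq cell_index o s x | x <- M]).

End Defs.

(* Main.v *)
Require Import Defs.
From HB Require Import structures.
From mathcomp Require Import all_boot all_order all_algebra.
From mathcomp Require Import reals.
Import Order.TTheory GRing.Theory Num.Theory.
Local Open Scope ring_scope.

Lemma bigmin_att (R : realType) (T : eqType) (f : T -> R) v (S : seq T) :
  \big[Num.min/v]_(s <- S) f s = v \/ exists2 p, p \in S & \big[Num.min/v]_(s <- S) f s = f p.
Proof.
elim: S => [|a S IH]; first by left; rewrite big_nil.
rewrite big_cons {1 3}/Order.min; case: ifP => _.
  by right; exists a; rewrite ?mem_head.
case: IH => [->|[p pS ->]]; first by left.
by right; exists p => //; rewrite in_cons pS orbT.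
Qed.

Lemma delta_att (R : realType) d (x : 'rV[R]_d) (S : seq 'rV[R]_d) :
  S != [::] -> exists2 p, p \in S & delta x S = edist x p.
Proof.
case: S => [//|a S] _; rewrite /delta /=.
case: (@bigmin_att _ _ (edist x) (edist x a) (a :: S)) => [->|//].
by exists a; rewrite ?mem_head.
Qed.

Lemma coord_le (R : realType) d (x y : 'rV[R]_d) i :
  `|x 0 i - y 0 i| <= edist x y.
Proof.
rewrite /edist -sqrtr_sqr; apply: ler_wsqrtr.
rewrite (bigD1 i) //= lerDl; apply: sumr_ge0 => j _; exact: sqr_ge0.
Qed.

Lemma delta_ge0 (R : realType) d (x : 'rV[R]_d) (S : seq 'rV[R]_d) : 0 <= delta x S.
Proof.
rewrite /delta; apply: (big_ind (fun y => 0 <= y)); rewrite ?sqrtr_ge0 //.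
  by move=> a b ha hb; rewrite le_min ha.
by move=> y _; rewrite /edist sqrtr_ge0.
Qed.
From mathcomp Require Import ring lra.

Theorem lemma6 (R : realType) (d : nat) :
  exists C : R, forall (M : seq 'rV[R]_d) (k : nat) (eps : R) (P1 : seq 'rV[R]_d)
    (o : 'rV[R]_d),
    uniq M -> (2 <= k)%N -> (k < size M)%N -> 0 < eps -> eps < 1 / 2 ->
    fpi_output M k P1 ->
    let eps1 := eps / (3 + 2 * eps) in
    let eps2 := eps1 * covrad M P1 / (2 * Num.sqrt (d%:R)) in
    (num_cells o eps2 M)%:R <= C * k%:R * ((Num.ceil (1 / eps1))%:~R) ^+ d.
Proof.
exists (((4 * d + 2) ^ d)%N%:R).
move=> M k eps P o uM k2 kM e0 e1 [sP subP diam fp].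
cbv zeta.
set eps1 := eps / (3 + 2 * eps).
set eps2 := eps1 * covrad M P / _.
have e1pos : 0 < eps1 by rewrite /eps1 divr_gt0 //; lra.
have e1le : eps1 <= 1 by rewrite /eps1 ler_pdivrMr; lra.
have onele : 1 <= 1 / eps1 by rewrite ler_pdivlMr // mul1r.
set c := Num.ceil (1 / eps1).
have c1 : 1 / eps1 <= c%:~R := ceil_ge _.
have c0 : 0 <= c by rewrite ceil_ge0; lra.
set m := `|c|%N.
have cmE : c = m%:Z by rewrite /m gez0_abs.
have cmR : c%:~R = m%:R :> R by rewrite cmE pmulrn.
have mpos : (0 < m)%N by rewrite -(ler1n R) -cmR; lra.
have kpos : (0 < k)%N by apply: leq_trans k2.
set Nn := ((4 * d + 2) * m)%N.
suff H : (num_cells o eps2 M <= k * Nn ^ d)%N.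
  rewrite cmR -natrX -!natrM ler_nat (leq_trans H) // /Nn expnMn.
  by rewrite mulnA (mulnC k).
have R0ge : 0 <= covrad M P.
  rewrite /covrad; apply: (big_ind (fun x => 0 <= x)) => //.
    by move=> a b ha hb; rewrite le_max ha.
  by move=> a _; exact: delta_ge0.
have [e2z|e2n] := eqVneq eps2 0.
  rewrite /num_cells.
  apply: (leq_trans (uniq_leq_size (undup_uniq _) (s2 := [:: \row_(i < d) (0:int)]) _)); last first.
    by rewrite /= muln_gt0 kpos expn_gt0 /Nn muln_gt0 mpos addn2.
  move=> z; rewrite mem_undup => /mapP [x _ ->]; rewrite inE /cell_index e2z.
  by apply/eqP/rowP => i; rewrite !mxE invr0 mulr0 floor0.
have dnz : Num.sqrt (d%:R) != 0 :> R.
  apply: contraNneq e2n => h; by rewrite /eps2 h mulr0 invr0 mulr0.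
have R0nz : covrad M P != 0.
  apply: contraNneq e2n => h; by rewrite /eps2 h mulr0 mul0r.
have sq0 : 0 <= Num.sqrt (d%:R) :> R := sqrtr_ge0 _.
have e2pos : 0 < eps2.
  rewrite lt0r e2n /= /eps2 divr_ge0 //; first by rewrite mulr_ge0 // ltW.
  by rewrite mulr_ge0.
set R0 := covrad M P.
set r := R0 / eps2.
have rE : r = 2 * Num.sqrt (d%:R) / eps1.
  by rewrite /r /eps2 /R0; field; rewrite dnz R0nz gt_eqF.
have sqd : Num.sqrt (d%:R) <= d%:R :> R.
  rewrite -{2}(ger0_norm (ler0n R d)) -sqrtr_sqr ler_sqrt ?sqr_ge0 //.
  by rewrite -natrX ler_nat; case: (d) => // n; rewrite expnS expn1 leq_pmulr.
have rN : 2 * r + 1 <= Nn%:R.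
  have h1 : Num.sqrt (d%:R) * (1 / eps1) <= d%:R * m%:R.
    apply: ler_pM => //; first by rewrite divr_ge0 // ltW.
    by rewrite -cmR.
  have -> : 2 * r + 1 = 4 * (Num.sqrt (d%:R) * (1 / eps1)) + 1.
    by rewrite rE; field; rewrite gt_eqF.
  rewrite /Nn natrM natrD natrM.
  have : 1 <= m%:R :> R by rewrite ler1n.
  nra.
pose g := fun (jt : 'I_k * {ffun 'I_d -> 'I_Nn}) =>
  \row_i (Num.floor ((P`_jt.1 0 i - o 0 i) / eps2 - r) + (jt.2 i : nat)%:Z).
rewrite /num_cells.
apply: (leq_trans (uniq_leq_size (undup_uniq _) (s2 := codom g) _)); last first.
  by rewrite size_codom card_prod card_ffun !card_ord.
move=> z; rewrite mem_undup => /mapP [x xM ->].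
have Pn0 : P != [::] by apply/eqP => h; move: sP; rewrite h => h0; move: k2; rewrite -h0.
have [p pP hp] := @delta_att _ _ x P Pn0.
have hR : edist x p <= R0.
  rewrite -hp /R0 /covrad; exact: (@le_bigmax_seq _ _ _ M 0 x xpredT (fun y => delta y P) xM isT).
have jk : (index p P < k)%N by rewrite -sP index_mem.
have hb : forall i : 'I_d,
  Num.floor ((p 0%R i - o 0%R i) / eps2 - r) <= Num.floor ((x 0%R i - o 0%R i) / eps2) /\
  (`|Num.floor ((x 0%R i - o 0%R i) / eps2) - Num.floor ((p 0%R i - o 0%R i) / eps2 - r)|%N < Nn)%N.
  move=> i.
  set y := (x 0 i - o 0 i) / eps2; set a := (p 0 i - o 0 i) / eps2.
  have hya : `|y - a| <= r.
    have -> : y - a = (x 0 i - p 0 i) / eps2 by rewrite /y /a; field; rewrite gt_eqF.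
    rewrite normrM (gtr0_norm (x := eps2^-1)) ?invr_gt0 // /r ler_pM2r ?invr_gt0 //.
    exact: le_trans (@coord_le _ _ x p i) hR.
  move: hya; rewrite ler_norml => /andP [lo hi].
  have flo : Num.floor (a - r) <= Num.floor y by apply: le_floor; lra.
  split => //.
  have := floor_le y; have := floor_itv (a - r) => /andP [_ h2] h1.
  rewrite -(ltr_nat R).
  have -> : (`|Num.floor y - Num.floor (a - r)|%N)%:R = (Num.floor y - Num.floor (a - r))%:~R :> R.
    by rewrite -[in RHS](gez0_abs (m := Num.floor y - Num.floor (a - r))) ?subr_ge0 // pmulrn.
  rewrite intrB; move: h2; rewrite intrD => h2.
  lra.
apply/codomP; exists (Ordinal jk, [ffun i => Ordinal (proj2 (hb i))]).
apply/rowP => i; rewrite !mxE ffunE /= nth_index //.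
by rewrite gez0_abs ?subr_ge0 ?(proj1 (hb i)) // addrCA subrr addr0.
Qed.
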